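(* Let $f:\mathbb{R}^n\to\mathbb{R}$ be a convex, continuously differentiable function whose gradient is locally $\nu$-Hölder for some $\nu\in(0,1]$, and assume $\mathcal{X}^*:=\arg\min_{x\in\mathbb{R}^n} f(x)\neq\emptyset$ with optimal value $f^*$. Let $x^0\in\mathbb{R}^n$ be such that the level set $\Lambda(x^0):=\{x\in\mathbb{R}^n: f(x)\le f(x^0)\}$ is bounded. Let $r:=\max\{\|x\|: x\in\Lambda(x^0)\}$, $\bar r:=(1+2(1+\nu)^{1/\nu})r$, $\Omega:=\overline{B}(0;\bar r)$, and let $L_\Omega>0$ be a constant with $\|\nabla f(x)-\nabla f(y)\|\le L_\Omega\|x-y\|^\nu$ for all $x,y\in\Omega$. Let $(x^k)_{k\ge0}$ be generated by $$x^{k+1}=x^k-\alpha_k\|\nabla f(x^k)\|^{\frac{1-\nu}{\nu}}\nabla f(x^k),\qquad \alpha_k\in\Big(0,\big(\tfrac{1+\nu}{L_\Omega}\big)^{1/\nu}\Big].$$ Then: (a) $x^k\in\Lambda(x^0)$ for all $k$, and for all $k\in\mathbb{N}_0$, $$f(x^{k+1})\le f(x^k)-\Big(\alpha_k-\tfrac{L_\Omega}{1+\nu}\alpha_k^{1+\nu}\Big)\|\nabla f(x^k)\|^{\frac{1+\nu}{\nu}},$$ and $f(x^{k+1})\le f(x^k)$ for all $k\in\mathbb{N}_0$; (b) if moreover $\alpha_k\in\big(0,\tfrac{4\nu}{(1+\nu)L_\Omega^{1/\nu}}\big]$ for all $k$, then for every $x^*\in\mathcal{X}^*$ and all $k\in\mathbb{N}_0$,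 $$\|x^{k+1}-x^*\|^2\le\|x^k-x^*\|^2-\Big(\tfrac{4\nu\alpha_k}{(1+\nu)L_\Omega^{1/\nu}}-\alpha_k^2\Big)\|\nabla f(x^k)\|^{\frac{2}{\nu}},$$ and $\|x^{k+1}-x^*\|\le\|x^k-x^*\|$ for all $k\in\mathbb{N}_0$; (c) the coefficient $\alpha\mapsto \alpha-\tfrac{L_\Omega}{1+\nu}\alpha^{1+\nu}$ in (a) is maximized over $\big(0,(\tfrac{1+\nu}{L_\Omega})^{1/\nu}\big]$ at $\alpha=1/L_\Omega^{1/\nu}$, and the coefficient $\alpha\mapsto\tfrac{4\nu\alpha}{(1+\nu)L_\Omega^{1/\nu}}-\alpha^2$ in (b) is maximized over $\big(0,\tfrac{4\nu}{(1+\nu)L_\Omega^{1/\nu}}\big]$ at $\alpha=\tfrac{2\nu}{(1+\nu)L_\Omega^{1/\nu}}$.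
   Context: A map $F$ is locally $\nu$-Hölder if every point has a neighbourhood $B(\bar x;\delta)$ and a constant $L>0$ with $\|F(x)-F(y)\|\le L\|x-y\|^\nu$ on it. $\overline{B}(0;\rho)$ denotes the closed Euclidean ball of radius $\rho$ centred at $0$; $\mathbb{N}_0=\{0,1,2,\dots\}$. Since $\nabla f$ is locally $\nu$-Hölder and $\Omega$ is compact, such a constant $L_\Omega$ exists. *)

(* Defs.v *)
From HB Require Import structures.
From mathcomp Require Import all_boot all_order all_algebra.
From mathcomp Require Import all_classical all_reals all_analysis.
Set Implicit Arguments. Unset Strict Implicit. Unset Printing Implicit Defensive.
Import Order.TTheory GRing.Theory Num.Theory.
Import numFieldNormedType.Exports.
Local Open Scope ring_scope.

(* Euclidean inner product and Euclidean norm on R^n = 'rV[R]_n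
   (the library's norm on 'rV is the max-norm, so we define the Euclidean one). *)
Definition dotv {R : realType} {n : nat} (u v : 'rV[R]_n) : R :=
  \sum_(i < n) u ord0 i * v ord0 i.

Definition enorm {R : realType} {n : nat} (u : 'rV[R]_n) : R :=
  Num.sqrt (dotv u u).

Definition convex_fun {R : realType} {n : nat} (f : 'rV[R]_n -> R) : Prop :=
  forall (x y : 'rV[R]_n) (t : R), 0 <= t -> t <= 1 ->
    f ((1 - t) *: x + t *: y) <= (1 - t) * f x + t * f y.

Definition is_gradient {R : realType} {n : nat}
  (f : 'rV[R]_n -> R) (gf : 'rV[R]_n -> 'rV[R]_n) : Prop :=
  forall x : 'rV[R]_n, differentiable f x /\
    forall v : 'rV[R]_n, 'd f x v = dotv (gf x) v.

Definition locally_holder {R : realType} {n : nat}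
  (F : 'rV[R]_n -> 'rV[R]_n) (nu : R) : Prop :=
  forall xb : 'rV[R]_n, exists delta : R, exists L : R, 0 < delta /\ 0 < L /\
    forall x y : 'rV[R]_n, enorm (x - xb) < delta -> enorm (y - xb) < delta ->
      enorm (F x - F y) <= L * powR (enorm (x - y)) nu.

(* Main.v *)
Require Import Defs.
From HB Require Import structures.
From mathcomp Require Import all_boot all_order all_algebra.
From mathcomp Require Import all_classical all_reals all_analysis.
From mathcomp Require Import ring lra.
Import Order.TTheory GRing.Theory Num.Theory.
Import numFieldNormedType.Exports.
Local Open Scope ring_scope.


Section Enorm.
Context {R : realType} {n : nat}.
Implicit Types u v w : 'rV[R]_n.

Lemma dotvC u v : dotv u v = dotv v u.
Proof. by apply: eq_bigr => i _; rewrite mulrC. Qed.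

Lemma dotvDr u v w : dotv u (v + w) = dotv u v + dotv u w.
Proof. by rewrite /dotv -big_split; apply: eq_bigr => i _; rewrite mxE mulrDr. Qed.

Lemma dotvZr (a : R) u v : dotv u (a *: v) = a * dotv u v.
Proof. by rewrite /dotv mulr_sumr; apply: eq_bigr => i _; rewrite mxE mulrCA. Qed.

Lemma dotvNr u v : dotv u (- v) = - dotv u v.
Proof. by rewrite -scaleN1r dotvZr mulN1r. Qed.

Lemma dotvBr u v w : dotv u (v - w) = dotv u v - dotv u w.
Proof. by rewrite dotvDr dotvNr. Qed.

Lemma dotvDl u v w : dotv (v + w) u = dotv v u + dotv w u.
Proof. by rewrite dotvC dotvDr !(dotvC u). Qed.

Lemma dotvZl (a : R) u v : dotv (a *: v) u = a * dotv v u.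
Proof. by rewrite dotvC dotvZr dotvC. Qed.

Lemma dotvBl u v w : dotv (v - w) u = dotv v u - dotv w u.
Proof. by rewrite dotvC dotvBr !(dotvC u). Qed.

Lemma dotv0r u : dotv u 0 = 0.
Proof. by rewrite -(scale0r 0) dotvZr mul0r. Qed.

Lemma dotv_ge0 u : 0 <= dotv u u.
Proof. by apply: sumr_ge0 => i _; rewrite -expr2 sqr_ge0. Qed.

Lemma dotv_eq0 u : dotv u u = 0 -> u = 0.
Proof.
move=> h; apply/rowP => i; rewrite mxE.
have hp : forall j : 'I_n, xpredT j -> 0 <= u ord0 j * u ord0 j.
  by move=> j _; rewrite -expr2 sqr_ge0.
have := psumr_eq0P hp h (i:=i) isT.
move/eqP; rewrite mulf_eq0 orbb => /eqP e.
by have -> : (0 : 'I_1) = ord0 by apply/val_inj.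
Qed.

Lemma enorm_ge0 u : 0 <= enorm u.
Proof. exact: sqrtr_ge0. Qed.

Lemma enorm_sq u : enorm u ^+ 2 = dotv u u.
Proof. by rewrite sqr_sqrtr // dotv_ge0. Qed.

Lemma enorm_eq0 u : enorm u = 0 -> u = 0.
Proof.
move=> /eqP; rewrite sqrtr_eq0 => h; apply: dotv_eq0.
by apply/eqP; rewrite eq_le h dotv_ge0.
Qed.

Lemma enorm0 : enorm (0 : 'rV[R]_n) = 0.
Proof. by rewrite /enorm dotv0r sqrtr0. Qed.

Lemma sq_le (a b : R) : 0 <= b -> a ^+ 2 <= b ^+ 2 -> a <= b.
Proof.
move=> b0 h; apply: (le_trans (ler_norm a)).
by rewrite -sqrtr_sqr -(ger0_norm b0) -sqrtr_sqr ler_sqrt // sqr_ge0.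
Qed.

Lemma CS u v : dotv u v <= enorm u * enorm v.
Proof.
set C := dotv u v; set A := dotv u u; set B := dotv v v.
have key t : 0 <= A - 2 * t * C + t ^+ 2 * B.
  have := dotv_ge0 (u - t *: v).
  rewrite dotvBl !dotvBr !dotvZl !dotvZr (dotvC v u) -/A -/B -/C.
  by move=> h; apply: le_trans h _; rewrite le_eqVlt; apply/orP; left; apply/eqP; ring.
have [C0|C0] := lerP C 0.
  by apply: le_trans C0 _; rewrite mulr_ge0 // enorm_ge0.
have B0 : 0 < B.
  rewrite lt_def dotv_ge0 andbT; apply/eqP => B0.
  have := key ((A + 1) / (2 * C)); rewrite B0 mulr0 addr0.
  have -> : 2 * ((A + 1) / (2 * C)) * C = A + 1.
    by field; rewrite gt_eqF.
  by rewrite opprD addrA subrr sub0r oppr_ge0 ler10.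
apply: sq_le; first by rewrite mulr_ge0 // enorm_ge0.
rewrite exprMn !enorm_sq -/A -/B.
have := key (C / B).
have -> : A - 2 * (C / B) * C + (C / B) ^+ 2 * B = A - C ^+ 2 / B.
  by field; rewrite gt_eqF.
by rewrite subr_ge0 ler_pdivrMr.
Qed.

Lemma enormZ (a : R) u : enorm (a *: u) = `|a| * enorm u.
Proof.
by rewrite /enorm dotvZl dotvZr mulrA -expr2 sqrtrM ?sqr_ge0 // sqrtr_sqr.
Qed.

Lemma enormN u : enorm (- u) = enorm u.
Proof. by rewrite -scaleN1r enormZ normrN normr1 mul1r. Qed.

Lemma enormD u v : enorm (u + v) <= enorm u + enorm v.
Proof.
apply: sq_le; first by rewrite addr_ge0 // enorm_ge0.
rewrite enorm_sq dotvDl !dotvDr sqrrD !enorm_sq (dotvC v u).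
have := CS u v; rewrite mulr2n; lra.
Qed.

Lemma enormB u v : enorm (u - v) <= enorm u + enorm v.
Proof. by rewrite -(enormN v) enormD. Qed.

Lemma enormB_sq u g (s : R) :
  enorm (u - s *: g) ^+ 2 = enorm u ^+ 2 - 2 * s * dotv g u + s ^+ 2 * enorm g ^+ 2.
Proof.
rewrite !enorm_sq dotvBl !dotvBr !dotvZl !dotvZr (dotvC u g); ring.
Qed.

End Enorm.


Section Calc.
Context {R : realType} {n : nat}.
Variables (f : 'rV[R]_n -> R) (gf : 'rV[R]_n -> 'rV[R]_n).
Hypothesis hg : is_gradient f gf.

Lemma line_derive (x d : 'rV[R]_n) (t : R) :
  is_derive t 1 (fun s : R => f (x + s *: d)) (dotv (gf (x + t *: d)) d).
Proof.
have [df dd] := hg (x + t *: d).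
have E : (fun h : R => h^-1 *: (((fun s => f (x + s *: d)) \o shift t) (h *: 1)
             - f (x + t *: d)))
       = (fun h : R => h^-1 *: ((f \o shift (x + t *: d)) (h *: d) - f (x + t *: d))).
  apply/funext => h /=; congr (_ *: (f _ - _)).
  by rewrite scaler1 scalerDl addrCA addrA.
have Hd : derivable (fun s : R => f (x + s *: d)) t 1.
  by rewrite /derivable E; exact: diff_derivable.
apply: DeriveDef => //.
by rewrite /derive E -/(derive f (x + t *: d) d) deriveE.
Qed.


End Calc.

Lemma right_deriv_le0 {R : realType} (p : R -> R) :
  derivable p 0 1 -> (forall h, 0 < h < 1 -> p h <= p 0) -> 'D_1 p 0 <= 0.
Proof.
move=> dp pmax.
rewrite ['D_1 p 0]cvg_at_rightE; last exact: dp.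
apply: limr_le.
  rewrite -(cvg_at_rightE (fun h : R => h^-1 *: ((p \o shift 0) _ - p 0))) //.
  apply: cvg_trans dp; apply: cvg_app.
  move=> A [e egt0 Ae]; exists e => // x xe xgt0; apply: Ae => //.
  exact/lt0r_neq0.
near=> h; apply: mulr_ge0_le0.
  by rewrite invr_ge0; apply: ltW; near: h; exists 1 => /=.
rewrite subr_le0 [_%:A]mulr1 /= addr0; apply: pmax; near: h.
exists 1 => //= h; rewrite /ball_ /= sub0r normrN => h1 h0.
by rewrite h0 /=; move: h1; rewrite gtr0_norm.

Unshelve. all: by end_near. Qed.


Section Calc2.
Context {R : realType} {n : nat}.
Variables (f : 'rV[R]_n -> R) (gf : 'rV[R]_n -> 'rV[R]_n).
Hypothesis hg : is_gradient f gf.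

Lemma grad_ineq : convex_fun f -> forall x y, f x + dotv (gf x) (y - x) <= f y.
Proof.
move=> cvx x y; set d := y - x; set K := f y - f x.
have D0 := is_deriveB (@line_derive R n f gf hg x d 0) (is_deriveZ K (@is_derive_id R R^o 0 1)).
have := @right_deriv_le0 _ _ (@ex_derive _ _ _ _ _ _ _ D0).
rewrite (@derive_val _ _ _ _ _ _ _ D0) scale0r addr0.
match goal with |- (?P -> _) -> _ => suff H : P end.
  move=> /(_ H); rewrite /K [_%:A]mulr1; lra.
move=> h /andP[h0 h1]; rewrite /= !fctE /= scale0r addr0 scaler0 subr0 -[K *: h]/(K * h).
have := cvx x y h (ltW h0) (ltW h1).
have -> : (1 - h) *: x + h *: y = x + h *: d.
  by apply/rowP => i; rewrite !mxE; ring.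
rewrite /K; lra.
Qed.

Lemma grad_min xs : (forall y, f xs <= f y) -> gf xs = 0.
Proof.
move=> hmin; set g := gf xs.
have D := @line_derive R n f gf hg xs g 0.
have D2 : is_derive (0:R) 1 (fun s : R => f (xs + s *: g)) 0.
  apply: (@derive1_at_min R _ (-1) 1) => //.
  - move=> t _; exact: (@ex_derive _ _ _ _ _ _ _ (@line_derive R n f gf hg xs g t)).
  - by rewrite in_itv /= oppr_lt0 ltr01.
  - by move=> t _; rewrite scale0r addr0.
have := @derive_val _ _ _ _ _ _ _ D; rewrite (@derive_val _ _ _ _ _ _ _ D2) scale0r addr0 => /esym.
exact: dotv_eq0.
Qed.

End Calc2.


Local Open Scope classical_set_scope.
Local Open Scope ring_scope.
Section Descent.
Context {R : realType} {n : nat}.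
Variables (f : 'rV[R]_n -> R) (gf : 'rV[R]_n -> 'rV[R]_n).
Hypothesis hg : is_gradient f gf.
Variables (nu L rho : R).
Hypothesis nu0 : 0 < nu.
Hypothesis hold : forall y z : 'rV[R]_n, enorm y <= rho -> enorm z <= rho ->
  enorm (gf y - gf z) <= L * powR (enorm (y - z)) nu.

Lemma descent (x y : 'rV[R]_n) : enorm x <= rho -> enorm y <= rho ->
  f y <= f x + dotv (gf x) (y - x) + L / (1 + nu) * powR (enorm (y - x)) (1 + nu).
Proof.
move=> hx hy.
set d := y - x; set E := enorm d; set c0 := dotv (gf x) d.
set K := L / (1 + nu) * powR E (1 + nu).
have xd : x + d = y by rewrite /d addrC subrK.
have nu1 : 1 + nu != 0 by rewrite gt_eqF // ltr_pwDr.
pose pw := fun s : R => powR s (1 + nu).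
pose phi := fun s : R => f (x + s *: d).
have D (t : R) : 0 < t -> is_derive t 1 (phi - c0 \*: id - K \*: pw)
   (dotv (gf (x + t *: d)) d - c0 *: 1 - K *: ((1 + nu) * powR t (1 + nu - 1))).
  move=> t0.
  exact: (is_deriveB (is_deriveB (@line_derive R n f gf hg x d t)
     (is_deriveZ c0 (@is_derive_id R R^o t 1))) (is_deriveZ K (is_derive1_powR (1 + nu) t0))).
set h := phi - c0 \*: id - K \*: pw.
have Dphi (t : R) : is_derive t 1 phi (dotv (gf (x + t *: d)) d) :=
  @line_derive R n f gf hg x d t.
have cphi (t : R) : {for t, continuous phi}.
  apply: differentiable_continuous; apply/derivable1_diffP.
  exact: (@ex_derive _ _ _ _ _ _ _ (Dphi t)).
have hcont : {within `[0, 1], continuous h}.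
  apply/continuous_within_itvP; first exact: ltr01.
  split.
  - move=> t; rewrite in_itv /= => /andP[t0 _].
    apply: differentiable_continuous; apply/derivable1_diffP.
    exact: (@ex_derive _ _ _ _ _ _ _ (D t t0)).
  - have -> : h 0 = phi 0 - c0 *: 0 - K *: pw 0 by [].
    apply: cvgB; first apply: cvgB.
    + exact: cvg_at_right_filter (cphi 0).
    + apply: cvgZl_tmp; exact: cvg_at_right_filter cvg_id.
    + apply: cvgZl_tmp; rewrite /pw powR0 //; exact: powR_cvg0 (ltr_pwDr _ _).
  - apply: cvg_at_left_filter.
    apply: differentiable_continuous; apply/derivable1_diffP.
    exact: (@ex_derive _ _ _ _ _ _ _ (D 1 ltr01)).
have Dp : forall t : R, t \in `]0, 1[ -> is_derive t 1 h
   (dotv (gf (x + t *: d)) d - c0 *: 1 - K *: ((1 + nu) * powR t (1 + nu - 1))).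
  by move=> t; rewrite in_itv /= => /andP[t0 _]; exact: D.
have [c c01 hmvt] := MVT ltr01 Dp hcont.
move: c01; rewrite in_itv /= => /andP[c0' c1].
set df := (X in _ = X * _) in hmvt.
have Edf : df <= 0.
  rewrite /df.
  have xc : enorm (x + c *: d) <= rho.
    have -> : x + c *: d = (1 - c) *: x + c *: y.
      by apply/rowP => i; rewrite /d !mxE; ring.
    apply: le_trans (enormD _ _) _; rewrite !enormZ !ger0_norm ?subr_ge0 ?(ltW c1) ?(ltW c0') //.
    nra.
  have H1 := hold _ _ xc hx.
  rewrite (_ : x + c *: d - x = c *: d) in H1; last by rewrite addrC addKr.
  rewrite enormZ ger0_norm ?(ltW c0') // powRM ?(ltW c0') ?enorm_ge0 // in H1.
  have e1 : dotv (gf (x + c *: d)) d - c0 <= L * (powR c nu * powR E nu) * E.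
    rewrite /c0 -dotvBl; apply: le_trans (CS _ _) _.
    by apply: ler_wpM2r; [exact: enorm_ge0 | exact: H1].
  have e2 : K * ((1 + nu) * powR c nu) = L * (powR c nu * powR E nu) * E.
    rewrite /K powRD ?(negbTE nu1) // powRr1 ?enorm_ge0 //.
    by field.
  have -> : 1 + nu - 1 = nu by ring.
  rewrite [c0%:A]mulr1 -[K *: _]/(K * _).
  lra.
have : h 1 <= h 0 by rewrite -subr_le0 hmvt subr0 mulr1.
rewrite /h /= !fctE /phi /pw.
rewrite -[(c0 \*: id) 1]/(c0 * 1) -[(c0 \*: id) 0]/(c0 * 0).
rewrite -[(K \*: _) 1]/(K * powR 1 (1 + nu)) -[(K \*: _) 0]/(K * powR 0 (1 + nu)).
have p1 : powR 1 (1 + nu) = 1 by rewrite powR1.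
rewrite p1 powR0 // scale1r scale0r addr0 xd.
lra.
Qed.

End Descent.
Local Close Scope classical_set_scope.


Section PowHelp.
Context {R : realType}.
Implicit Types e a b nu L : R.

Lemma pD e a b : 0 < e -> powR e a * powR e b = powR e (a + b).
Proof. by move=> e0; rewrite powRD // (gt_eqF e0) implybT. Qed.

Lemma pM e a b : powR (powR e a) b = powR e (a * b).
Proof. by rewrite powRrM. Qed.

Lemma e_1nu e nu : 0 < e -> 0 < nu -> powR e ((1 - nu) / nu) * e = powR e (1 / nu).
Proof.
move=> e0 nu0; rewrite -{2}(powRr1 (ltW e0)) pD //; apply: (congr1 (powR e)).
by field; rewrite gt_eqF.
Qed.

Lemma e_2 e nu : 0 < e -> 0 < nu -> powR e ((1 - nu) / nu) * e ^+ 2 = powR e ((1 + nu) / nu).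
Proof.
move=> e0 nu0; rewrite expr2 mulrA e_1nu // -{2}(powRr1 (ltW e0)) pD //; apply: (congr1 (powR _)).
by field; rewrite gt_eqF.
Qed.

Lemma e_3 t e nu : 0 <= t -> 0 < e -> 0 < nu ->
  powR (t * powR e ((1 - nu) / nu) * e) (1 + nu) = powR t (1 + nu) * powR e ((1 + nu) / nu).
Proof.
move=> t0 e0 nu0; rewrite -mulrA e_1nu // powRM ?powR_ge0 // pM; congr (_ * powR _ _).
by field; rewrite gt_eqF.
Qed.

Lemma e_4 e nu : 0 < e -> 0 < nu ->
  powR e ((1 - nu) / nu) * powR e ((1 + nu) / nu) = powR e (2 / nu).
Proof. move=> e0 nu0; rewrite pD //; apply: (congr1 (powR _)); by field; rewrite gt_eqF. Qed.

Lemma e_5 e nu : 0 < e -> 0 < nu ->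
  (powR e ((1 - nu) / nu) * e) ^+ 2 = powR e (2 / nu).
Proof.
move=> e0 nu0; rewrite e_1nu // expr2 pD //; apply: (congr1 (powR _)); by field; rewrite gt_eqF.
Qed.

Lemma T1 L nu : 1 / powR L (1 / nu) = powR L (- (1 / nu)).
Proof. by rewrite powRN div1r. Qed.

Lemma T2 L nu : 0 < L -> 0 < nu -> powR (powR L (- (1 / nu))) nu = L^-1.
Proof.
move=> L0 nu0; rewrite pM (_ : - (1 / nu) * nu = -1) ?powR_inv1 ?(ltW L0) //.
by field; rewrite gt_eqF.
Qed.

Lemma T3 L q : 0 < L -> powR (1 / L) q = powR L (- q).
Proof.
by move=> L0; rewrite div1r -powR_inv1 ?(ltW L0) // pM mulN1r.
Qed.

Lemma powR0' a : 0 < a -> powR 0 a = 0.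
Proof. by move=> a0; rewrite powR0 // gt_eqF. Qed.

End PowHelp.


Lemma enorm_cases {R : realType} {n : nat} (g : 'rV[R]_n) :
  g = 0 \/ 0 < enorm g.
Proof.
have := enorm_ge0 g; rewrite le_eqVlt => /orP[/eqP e|->]; last by right.
by left; apply: enorm_eq0.
Qed.

Section PartC.
Context {R : realType}.
Variables (nu L : R).
Hypotheses (nu0 : 0 < nu) (L0 : 0 < L).

Lemma powRinv q : powR (L^-1) q = powR L (- q).
Proof. by rewrite -powR_inv1 ?(ltW L0) // pM mulN1r. Qed.

Lemma c2 : 1 / powR L (1 / nu) <= powR ((1 + nu) / L) (1 / nu).
Proof.
have nu1 : 0 < 1 + nu by rewrite ltr_pwDr.
rewrite T1 powRM ?(ltW nu1) ?invr_ge0 ?(ltW L0) // powRinv.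
rewrite -{1}(mul1r (powR L _)); apply: ler_wpM2r; first exact: powR_ge0.
rewrite -[X in X <= _](powRr0 (1 + nu)); apply: (@ler_powR R (1 + nu)).
  by rewrite lerDl ltW.
by rewrite divr_ge0 ?ler01 ?ltW.
Qed.

Lemma tau0_pow : powR (1 / powR L (1 / nu)) (1 + nu) = 1 / powR L (1 / nu) * L^-1.
Proof.
rewrite T1 -pD ?powR_gt0 // powRr1 ?powR_ge0 // T2 //.
Qed.

Lemma c3 (a : R) : 0 < a ->
  a - L / (1 + nu) * powR a (1 + nu)
  <= 1 / powR L (1 / nu) - L / (1 + nu) * powR (1 / powR L (1 / nu)) (1 + nu).
Proof.
move=> a0; have nu1 : 0 < 1 + nu by rewrite ltr_pwDr.
rewrite tau0_pow; set t0 := 1 / powR L (1 / nu).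
have iL : 0 < L^-1 by rewrite invr_gt0.
have Y := @conjugate_powR R a (L^-1) (1 + nu) ((1 + nu) / nu) (ltW a0)
  (ltW iL) nu1 (divr_gt0 nu1 nu0).
have Yc : (1 + nu)^-1 + ((1 + nu) / nu)^-1 = 1.
  by field; rewrite !gt_eqF.
have {}Y := Y Yc.
have bq : powR L^-1 ((1 + nu) / nu) = t0 * L^-1.
  rewrite powRinv /t0 T1 -(powR_inv1 (ltW L0)) pD //.
  by congr (powR _ _); field; rewrite gt_eqF.
rewrite bq in Y.
have Y2 := ler_wpM2l (ltW L0) Y.
have e1 : L * (a * L^-1) = a by field; rewrite gt_eqF.
have e2 : L * (powR a (1 + nu) / (1 + nu) + t0 * L^-1 / ((1 + nu) / nu))
   = L / (1 + nu) * powR a (1 + nu) + nu / (1 + nu) * t0.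
  by field; rewrite !gt_eqF.
have e3 : t0 - L / (1 + nu) * (t0 * L^-1) = nu / (1 + nu) * t0.
  by field; rewrite !gt_eqF.
rewrite e1 e2 in Y2; rewrite e3; lra.
Qed.

End PartC.

Section Main.
Context {R : realType} {n : nat}.
Variables (f : 'rV[R]_n -> R) (gf : 'rV[R]_n -> 'rV[R]_n) (nu L r rho : R).
Hypotheses (hg : is_gradient f gf) (cvx : convex_fun f) (nu0 : 0 < nu) (L0 : 0 < L)
  (r0 : 0 <= r).
Hypothesis hrho : rho = (1 + 2 * powR (1 + nu) (1 / nu)) * r.
Hypothesis hold : forall y z : 'rV[R]_n, enorm y <= rho -> enorm z <= rho ->
  enorm (gf y - gf z) <= L * powR (enorm (y - z)) nu.
Variable xs : 'rV[R]_n.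
Hypotheses (xsmin : forall y, f xs <= f y) (xsr : enorm xs <= r).

Let P := powR (1 + nu) (1 / nu).
Let P0 : 0 <= P. Proof. exact: powR_ge0. Qed.

Lemma r_rho : r <= rho.
Proof. rewrite hrho; have := mulr_ge0 P0 r0; rewrite /P; lra. Qed.

Lemma gbound z : enorm z <= r -> enorm (gf z) <= L * powR (2 * r) nu.
Proof.
move=> zr.
have gm : gf xs = 0 := @grad_min R n f gf hg xs xsmin.
have := hold _ _ (le_trans zr r_rho) (le_trans xsr r_rho).
rewrite gm subr0 => h; apply: le_trans h _; apply: ler_wpM2l; first exact: ltW.
apply: ge0_ler_powR; [exact: ltW | by rewrite nnegrE enorm_ge0 |
  by rewrite nnegrE mulr_ge0 // ler0n | ].
apply: le_trans (enormB _ _) _; apply: le_trans (lerD zr xsr) _; lra.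
Qed.

Lemma stepbound z (t : R) : enorm z <= r -> 0 <= t -> t <= powR ((1 + nu) / L) (1 / nu) ->
  enorm ((t * powR (enorm (gf z)) ((1 - nu) / nu)) *: gf z) <= 2 * r * P.
Proof.
move=> zr t0 tb; have nu1 : 0 < 1 + nu by rewrite ltr_pwDr.
rewrite enormZ ger0_norm ?mulr_ge0 ?powR_ge0 //.
have [g0|e0] := enorm_cases (gf z).
  by rewrite g0 enorm0 mulr0 !mulr_ge0 // ler0n.
rewrite -[_ * enorm (gf z)]mulrA e_1nu //.
have hb := gbound _ zr.
apply: le_trans (_ : powR ((1 + nu) / L) (1 / nu) * powR (L * powR (2 * r) nu) (1 / nu) <= _).
  apply: ler_pM => //; first exact: powR_ge0.
  apply: ge0_ler_powR => //; [by rewrite divr_ge0 ?ler01 ?ltW |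
    by rewrite nnegrE enorm_ge0 | by rewrite nnegrE mulr_ge0 ?powR_ge0 ?ltW].
have h1 : 0 <= (1 + nu) / L by rewrite divr_ge0 ?ltW.
have h2 : 0 <= L * powR (2 * r) nu by rewrite mulr_ge0 ?powR_ge0 ?ltW.
rewrite -(powRM _ h1 h2).
rewrite mulrA (_ : (1 + nu) / L * L = 1 + nu); last by field; rewrite gt_eqF.
have h3 : 0 <= powR (2 * r) nu by exact: powR_ge0.
rewrite (powRM _ (ltW nu1) h3) pM (_ : nu * (1 / nu) = 1); last by field; rewrite gt_eqF.
have h4 : 0 <= 2 * r by rewrite mulr_ge0 ?ler0n.
by rewrite (powRr1 h4) /P mulrC.
Qed.

Lemma coef_ge0 (t : R) : 0 <= t -> t <= powR ((1 + nu) / L) (1 / nu) ->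
  0 <= t - L / (1 + nu) * powR t (1 + nu).
Proof.
move=> t0 tb; have nu1 : 0 < 1 + nu by rewrite ltr_pwDr.
move: t0; rewrite le_eqVlt => /orP[/eqP <-|t0].
  by rewrite powR0' // mulr0 subr0.
have hp : powR t nu <= (1 + nu) / L.
  have tn : t \is Num.nneg by rewrite nnegrE ltW.
  have bn : powR ((1 + nu) / L) (1 / nu) \is Num.nneg by rewrite nnegrE powR_ge0.
  have := ge0_ler_powR (ltW nu0) tn bn tb.
  rewrite /= pM (_ : 1 / nu * nu = 1); last by field; rewrite gt_eqF.
  by rewrite powRr1 // divr_ge0 ?ltW.
have ht : powR t (1 + nu) = t * powR t nu by rewrite -pD // powRr1 ?ltW.
rewrite ht.
have k : L / (1 + nu) * (t * powR t nu) <= L / (1 + nu) * (t * ((1 + nu) / L)).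
  apply: ler_wpM2l; first by rewrite divr_ge0 ?ltW.
  by apply: ler_wpM2l; first exact: ltW.
have k2 : L / (1 + nu) * (t * ((1 + nu) / L)) = t by field; rewrite !gt_eqF.
lra.
Qed.

Lemma onestep y (t : R) : enorm y <= r -> 0 <= t -> t <= powR ((1 + nu) / L) (1 / nu) ->
  f (y - (t * powR (enorm (gf y)) ((1 - nu) / nu)) *: gf y) <=
  f y - (t - L / (1 + nu) * powR t (1 + nu)) * powR (enorm (gf y)) ((1 + nu) / nu).
Proof.
move=> yr t0 tb; have nu1 : 0 < 1 + nu by rewrite ltr_pwDr.
set s := t * _.
have s0 : 0 <= s by rewrite mulr_ge0 ?powR_ge0.
have yrho : enorm y <= rho := le_trans yr r_rho.
have wrho : enorm (y - s *: gf y) <= rho.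
  apply: le_trans (enormB _ _) _; have := stepbound _ _ yr t0 tb; rewrite hrho -/s /P.
  lra.
have := @descent R n f gf hg nu L rho nu0 hold _ _ yrho wrho.
rewrite (_ : y - s *: gf y - y = - (s *: gf y)); last by rewrite addrC addKr.
rewrite dotvNr dotvZr enormN enormZ ger0_norm // -enorm_sq.
have [g0|e0] := enorm_cases (gf y).
  rewrite g0 enorm0 !scaler0 subr0 mulr0 powR0' ?divr_gt0 // powR0' //.
  lra.
rewrite /s e_3 // -mulrA e_2 //; lra.
Qed.

Lemma coco y : enorm y <= r ->
  2 * (nu / (1 + nu) * (1 / powR L (1 / nu))) * powR (enorm (gf y)) ((1 + nu) / nu)
  <= dotv (gf y) (y - xs).
Proof.
move=> yr; have nu1 : 0 < 1 + nu by rewrite ltr_pwDr.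
have gm : gf xs = 0 := @grad_min R n f gf hg xs xsmin.
have [g0|e0] := enorm_cases (gf y).
  by rewrite g0 enorm0 powR0' ?divr_gt0 // mulr0 dotvC dotv0r.
have tb := @c2 R nu L nu0 L0.
have tp := @tau0_pow R nu L nu0 L0.
set t0 := 1 / powR L (1 / nu) in tb tp *.
have t0p : 0 < t0 by rewrite divr_gt0 ?powR_gt0.
set g := gf y; set E := powR (enorm g) ((1 + nu) / nu).
have i1 := onestep _ _ yr (ltW t0p) tb.
have i1' := xsmin (y - (t0 * powR (enorm g) ((1 - nu) / nu)) *: g).
set s := t0 * _ in i1 i1'.
have s0 : 0 <= s by rewrite mulr_ge0 ?powR_ge0 ?ltW.
have xsrho : enorm xs <= rho := le_trans xsr r_rho.
have wrho : enorm (xs + s *: g) <= rho.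
  apply: le_trans (enormD _ _) _; have := stepbound _ _ yr (ltW t0p) tb; rewrite hrho -/s /P.
  rewrite -/g; have := xsr; lra.
have hs2 : s * enorm g ^+ 2 = t0 * E by rewrite /s -mulrA e_2.
have hs3 : powR (s * enorm g) (1 + nu) = powR t0 (1 + nu) * E by rewrite /s e_3 ?ltW.
have d2 := @descent R n f gf hg nu L rho nu0 hold _ _ xsrho wrho.
rewrite gm dotvC dotv0r addr0 (_ : xs + s *: g - xs = s *: g) in d2;
  last by rewrite addrAC subrr add0r.
rewrite enormZ (ger0_norm s0) hs3 tp in d2.
have gi := @grad_ineq R n f gf hg cvx y (xs + s *: g).
rewrite (_ : xs + s *: g - y = (xs - y) + s *: g) in gi; last by rewrite addrAC.
rewrite dotvDr dotvZr -enorm_sq hs2 in gi.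
rewrite tp -/g -/E in i1.
have db : dotv g (y - xs) = - dotv g (xs - y) by rewrite !dotvBr; ring.
have e3 : t0 - L / (1 + nu) * (t0 / L) = nu / (1 + nu) * t0.
  by field; rewrite !gt_eqF.
have e4 : (t0 - L / (1 + nu) * (t0 / L)) * E = nu / (1 + nu) * t0 * E by rewrite e3.
rewrite db -/g; lra.
Qed.

End Main.

Section MainB.
Context {R : realType} {n : nat}.
Variables (f : 'rV[R]_n -> R) (gf : 'rV[R]_n -> 'rV[R]_n) (nu L r rho : R).
Hypotheses (hg : is_gradient f gf) (cvx : convex_fun f) (nu0 : 0 < nu) (L0 : 0 < L)
  (r0 : 0 <= r).
Hypothesis hrho : rho = (1 + 2 * powR (1 + nu) (1 / nu)) * r.
Hypothesis hold : forall y z : 'rV[R]_n, enorm y <= rho -> enorm z <= rho ->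
  enorm (gf y - gf z) <= L * powR (enorm (y - z)) nu.
Variable xs : 'rV[R]_n.
Hypotheses (xsmin : forall y, f xs <= f y) (xsr : enorm xs <= r).

Lemma bstep y (a : R) : enorm y <= r -> 0 <= a ->
  enorm (y - (a * powR (enorm (gf y)) ((1 - nu) / nu)) *: gf y - xs) ^+ 2 <=
  enorm (y - xs) ^+ 2 - (4 * nu * a / ((1 + nu) * powR L (1 / nu)) - a ^+ 2)
    * powR (enorm (gf y)) (2 / nu).
Proof.
move=> yr a0; have nu1 : 0 < 1 + nu by rewrite ltr_pwDr.
have cc := @coco R n f gf nu L r rho hg cvx nu0 L0 r0 hrho hold xs xsmin xsr y yr.
set g := gf y in cc *; set E := powR (enorm g) ((1 + nu) / nu) in cc.
set s := a * _.
rewrite (_ : y - s *: g - xs = (y - xs) - s *: g); last by rewrite addrAC.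
rewrite enormB_sq.
have [g0|e0] := enorm_cases g.
  rewrite g0 dotvC dotv0r enorm0 powR0' ?divr_gt0 ?ltr0n //; lra.
set c := nu / (1 + nu) * (1 / powR L (1 / nu)) in cc.
have s0 : 0 <= s by rewrite mulr_ge0 ?powR_ge0.
have k1 : 2 * s * (2 * c * E) <= 2 * s * dotv g (y - xs).
  by apply: ler_wpM2l; [rewrite mulr_ge0 ?ler0n | exact: cc].
have k2 : s * E = a * powR (enorm g) (2 / nu) by rewrite /s -mulrA e_4.
have k3 : s ^+ 2 * enorm g ^+ 2 = a ^+ 2 * powR (enorm g) (2 / nu).
  by rewrite -exprMn /s -mulrA exprMn e_5.
have k4 : 4 * nu * a / ((1 + nu) * powR L (1 / nu)) = 4 * c * a.
  by rewrite /c; field; rewrite !gt_eqF ?powR_gt0.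
have k2' : c * (s * E) = c * (a * powR (enorm g) (2 / nu)) by rewrite k2.
rewrite k4; lra.
Qed.

End MainB.


Lemma subr_ge0_intro {R : realType} (a b : R) : a <= b -> 0 <= b - a.
Proof. by rewrite subr_ge0. Qed.

Theorem theorem3p13 (R : realType) (n : nat) (nu : R)
  (f : 'rV[R]_n -> R) (gf : 'rV[R]_n -> 'rV[R]_n)
  (x0 : 'rV[R]_n) (r L : R) (x : nat -> 'rV[R]_n) (alpha : nat -> R) :
  0 < nu -> nu <= 1 ->
  convex_fun f ->
  is_gradient f gf ->
  continuous gf ->
  locally_holder gf nu ->
  (exists xs : 'rV[R]_n, forall y, f xs <= f y) ->
  (* the level set Lambda(x0) is bounded *)
  (exists M : R, forall y, f y <= f x0 -> enorm y <= M) ->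
  (* r = max { ||y|| : y in Lambda(x0) } *)
  (exists y, f y <= f x0 /\ enorm y = r) ->
  (forall y, f y <= f x0 -> enorm y <= r) ->
  (* L = L_Omega, Hölder constant on Omega = closed ball(0, rbar) *)
  0 < L ->
  (forall y z : 'rV[R]_n,
     enorm y <= (1 + 2 * powR (1 + nu) (1 / nu)) * r ->
     enorm z <= (1 + 2 * powR (1 + nu) (1 / nu)) * r ->
     enorm (gf y - gf z) <= L * powR (enorm (y - z)) nu) ->
  x 0%N = x0 ->
  (forall k, x k.+1 = x k - (alpha k * powR (enorm (gf (x k))) ((1 - nu) / nu)) *: gf (x k)) ->
  (forall k, 0 < alpha k /\ alpha k <= powR ((1 + nu) / L) (1 / nu)) ->
  (* (a) *)
  ((forall k, f (x k) <= f x0)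
   /\ (forall k, f (x k.+1) <= f (x k)
         - (alpha k - L / (1 + nu) * powR (alpha k) (1 + nu))
           * powR (enorm (gf (x k))) ((1 + nu) / nu))
   /\ (forall k, f (x k.+1) <= f (x k)))
  (* (b) *)
  /\ ((forall k, alpha k <= 4 * nu / ((1 + nu) * powR L (1 / nu))) ->
      forall xs : 'rV[R]_n, (forall y, f xs <= f y) ->
        (forall k, enorm (x k.+1 - xs) ^+ 2 <= enorm (x k - xs) ^+ 2
            - (4 * nu * alpha k / ((1 + nu) * powR L (1 / nu)) - alpha k ^+ 2)
              * powR (enorm (gf (x k))) (2 / nu))
        /\ (forall k, enorm (x k.+1 - xs) <= enorm (x k - xs)))
  (* (c) *)
  /\ ((0 < 1 / powR L (1 / nu) /\ 1 / powR L (1 / nu) <= powR ((1 + nu) / L) (1 / nu)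
       /\ forall a : R, 0 < a -> a <= powR ((1 + nu) / L) (1 / nu) ->
          a - L / (1 + nu) * powR a (1 + nu)
          <= 1 / powR L (1 / nu) - L / (1 + nu) * powR (1 / powR L (1 / nu)) (1 + nu))
      /\ (0 < 2 * nu / ((1 + nu) * powR L (1 / nu))
          /\ 2 * nu / ((1 + nu) * powR L (1 / nu)) <= 4 * nu / ((1 + nu) * powR L (1 / nu))
          /\ forall a : R, 0 < a -> a <= 4 * nu / ((1 + nu) * powR L (1 / nu)) ->
             4 * nu * a / ((1 + nu) * powR L (1 / nu)) - a ^+ 2
             <= 4 * nu * (2 * nu / ((1 + nu) * powR L (1 / nu))) / ((1 + nu) * powR L (1 / nu))
                - (2 * nu / ((1 + nu) * powR L (1 / nu))) ^+ 2)).
Proof.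
move=> nu0 nu1 cvx hg _ _ [xs0 hxs0] _ _ hr L0 hold x0e xrec ha.
have nu1' : 0 < 1 + nu by rewrite ltr_pwDr.
have xs0r : enorm xs0 <= r by apply: hr; exact: hxs0.
have r0 : 0 <= r := le_trans (enorm_ge0 xs0) xs0r.
set rho := (1 + 2 * powR (1 + nu) (1 / nu)) * r in hold.
have hrho : rho = (1 + 2 * powR (1 + nu) (1 / nu)) * r by [].
have OS k : enorm (x k) <= r -> f (x k.+1) <= f (x k)
    - (alpha k - L / (1 + nu) * powR (alpha k) (1 + nu))
      * powR (enorm (gf (x k))) ((1 + nu) / nu).
  move=> xr; rewrite xrec.
  have [a0 ab] := ha k.
  exact: (@onestep R n f gf nu L r rho hg nu0 L0 r0 hrho hold xs0 hxs0 xs0r (x k) (alpha k) xr (ltW a0) ab).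
have DEC k : enorm (x k) <= r -> f (x k.+1) <= f (x k).
  move=> xr; have := OS k xr; have [a0 ab] := ha k.
  have := @coef_ge0 R nu L nu0 L0 (alpha k) (ltW a0) ab.
  have := powR_ge0 (enorm (gf (x k))) ((1 + nu) / nu).
  nra.
have LV : forall k, f (x k) <= f x0.
  elim=> [|k IH]; first by rewrite x0e.
  exact: le_trans (DEC k (hr _ IH)) IH.
split; [split; [exact: LV | split] | split].
- by move=> k; apply: OS; apply: hr; exact: LV.
- by move=> k; apply: DEC; apply: hr; exact: LV.
- move=> abnd xs hxs.
  have xsr : enorm xs <= r by apply: hr; exact: hxs.
  have BS k : enorm (x k.+1 - xs) ^+ 2 <= enorm (x k - xs) ^+ 2
      - (4 * nu * alpha k / ((1 + nu) * powR L (1 / nu)) - alpha k ^+ 2)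
        * powR (enorm (gf (x k))) (2 / nu).
    rewrite xrec; have [a0 _] := ha k.
    exact: (@bstep R n f gf nu L r rho hg cvx nu0 L0 r0 hrho hold xs hxs xsr (x k) (alpha k) (hr _ (LV k)) (ltW a0)).
  split; first exact: BS.
  move=> k; apply: sq_le; first exact: enorm_ge0.
  apply: le_trans (BS k) _.
  have [a0 _] := ha k; have ab := abnd k.
  set D := (1 + nu) * powR L (1 / nu).
  have D0 : 0 < D by rewrite mulr_gt0 ?powR_gt0.
  have e : 4 * nu * alpha k / D = alpha k * (4 * nu / D) by field; rewrite gt_eqF.
  rewrite e; rewrite -/D in ab.
  have W := powR_ge0 (enorm (gf (x k))) (2 / nu).
  have := mulr_ge0 (mulr_ge0 (ltW a0) (subr_ge0_intro _ _ ab)) W.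
  lra.
- split.
  + split; first by rewrite divr_gt0 ?powR_gt0.
    split; first exact: (@c2 R nu L nu0 L0).
    by move=> a a0 _; exact: (@c3 R nu L nu0 L0 a a0).
  + set D := (1 + nu) * powR L (1 / nu).
    have D0 : 0 < D by rewrite mulr_gt0 ?powR_gt0.
    have q0 : 0 <= nu / D by rewrite divr_ge0 ?ltW.
    split; first by rewrite divr_gt0 // mulr_gt0 // ltr0n.
    split; first by rewrite -!mulrA; lra.
    move=> a a0 _.
    have := sqr_ge0 (a - 2 * nu / D).
    rewrite -!mulrA; lra.
Qed.
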